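(* For all integers $n\ge1$ and $r\ge1$, \[ \sum_{k=1}^{n}\binom{k-1}{r-1}\omega(n-k)=\sum_{\substack{m+k=n\\ m\ge1,\ k\ge0}}c_\psi(m,r)\,\Omega_m(k). \]
   Context: A composition of $n$ is an ordered sequence $(a_1,\dots,a_r)$ of positive integers with $a_1+\dots+a_r=n$; it is relatively prime if $\gcd(a_1,\dots,a_r)=1$. $c_\psi(n,r)$ is the number of relatively prime compositions of $n$ with exactly $r$ parts. $\omega:\mathbb{Z}\to\mathbb{Z}$ is defined by $\omega(0)=1$; $\omega(m)=(-1)^j$ if $m=\frac{3j^2\pm j}{2}$ for some integer $j\ge1$; $\omega(m)=0$ otherwise (in particular for $m<0$). For $m\ge1$ and integer $k$, $\Omega_m(k)=\sum_{j\ge0}\omega(k-jm)=\omega(k)+\omega(k-m)+\omega(k-2m)+\cdots$. *)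

(* Defs.v *)
From mathcomp Require Import all_boot all_order all_algebra.
Set Implicit Arguments. Unset Strict Implicit. Unset Printing Implicit Defensive.
Import Order.TTheory GRing.Theory Num.Theory.

Definition gcd_seq (s : seq nat) : nat := foldr gcdn 0%N s.

(* A composition of n with exactly r parts is a sequence (a_1..a_r) of positive
   integers summing to n; each part is <= n, so we encode it as an r-tuple of
   'I_n.+1.  c_psi n r counts those that are relatively prime. *)
Definition is_rp_composition (n r : nat) (t : r.-tuple 'I_n.+1) : bool :=
  [&& all (fun a : 'I_n.+1 => 0 < a)%N t,
      (\sum_(a <- t) (a : nat) == n)%N &
      gcd_seq (map (fun a : 'I_n.+1 => (a : nat)) t) == 1%N].

Definition c_psi (n r : nat) : nat :=
  #|[set t : r.-tuple 'I_n.+1 | is_rp_composition t]|.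

(* omega on nonnegative integers: omega 0 = 1; omega m = (-1)^j if
   m = (3j^2 +- j)/2 for some j >= 1 (such j is <= m, and unique); else 0. *)
Definition omega_nat (m : nat) : int :=
  if m == 0%N then 1%R
  else match [pick j : 'I_m.+1 | (0 < j)%N &&
               ((m.*2 == 3 * j ^ 2 + j)%N || (m.*2 == 3 * j ^ 2 - j)%N)] with
       | Some j => ((-1) ^+ j)%R
       | None => 0%R
       end.

Definition omega (m : int) : int :=
  match m with
  | Posz k => omega_nat k
  | Negz _ => 0%R
  end.

(* Omega_m(k) = sum_{j>=0} omega(k - j m); for m >= 1 and k >= 0 the terms with
   j > k have negative argument and vanish, so the sum over j <= k is exact. *)
Definition Omega (m k : nat) : int :=
  (\sum_(j < k.+1) omega (k%:Z - (j * m)%N%:Z))%R.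

(* Main.v *)
Require Import Defs.
From mathcomp Require Import all_boot all_order all_algebra.
From mathcomp Require Import zify.
Set Implicit Arguments. Unset Strict Implicit. Unset Printing Implicit Defensive.
Import Order.TTheory GRing.Theory Num.Theory.

Definition cnt B r (F : seq nat -> nat) : nat :=
  \sum_(t : r.-tuple 'I_B) F (map val t).

Lemma cnt0 B F : cnt B 0 F = F [::].
Proof.
rewrite /cnt (eq_bigr (fun _ => F [::])); last by move=> t _; rewrite tuple0.
by rewrite sum_nat_const card_tuple expn0 mul1n.
Qed.

Lemma cntS B r F : cnt B r.+1 F = \sum_(a < B) cnt B r (fun s => F (val a :: s)).
Proof.
rewrite /cnt pair_bigA /=.
rewrite (reindex (fun p : 'I_B * r.-tuple 'I_B => [tuple of p.1 :: p.2])) /=.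
  by [].
exists (fun t : r.+1.-tuple 'I_B => (thead t, [tuple of behead t])).
  by move=> [a t] _ /=; rewrite theadE; congr pair; apply: val_inj.
by move=> t _; rewrite [in RHS](tuple_eta t).
Qed.

Definition fc r M : nat :=
  if r is r'.+1 then (if M is M'.+1 then 'C(M', r') else 0) else (M == 0 : nat).

Lemma fc_pascal r M : fc r.+1 M.+1 = fc r M + fc r.+1 M.
Proof.
case: r => [|r]; first by case: M => [|M] //=; rewrite !bin0.
case: M => [|M] /=; first by rewrite bin0n.
by rewrite binS addnC.
Qed.

Lemma hrec r M : \sum_(0 <= a < M.+1) (0 < a) * fc r (M - a) = fc r.+1 M.
Proof.
elim: M => [|M IH]; first by rewrite big_nat1.
rewrite big_nat_recl // mul0n add0n.
under eq_bigr do rewrite ltn0Sn mul1n subSS.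
rewrite big_nat_recl // subn0 fc_pascal; congr (_ + _).
rewrite -IH big_nat_recl // mul0n add0n.
by apply: eq_bigr => a _; rewrite ltn0Sn mul1n.
Qed.

Definition compo M (s : seq nat) : bool := all (fun x => 0 < x) s && (sumn s == M).

Lemma cnt_comp B r M : M < B -> cnt B r (compo M) = fc r M.
Proof.
elim: r M => [|r IH] M MB.
  by rewrite cnt0 /compo /= eq_sym.
rewrite cntS.
rewrite (eq_bigr (fun a : 'I_B => ((0 < a) && (a <= M)) * fc r (M - a))); last first.
  move=> a _.
  case: (posnP a) => [a0|apos] /=.
    rewrite /cnt big1 // => t _; by rewrite /compo /= a0.
  case: (leqP a M) => aM /=.
    rewrite mul1n -IH; last by apply: leq_ltn_trans (leq_subr _ _) MB.
    rewrite /cnt; apply: eq_bigr => t _; rewrite /compo /= apos /=.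
    congr andb; apply/eqP/eqP => [<-|->]; first by rewrite addKn.
    by rewrite subnKC.
  rewrite /cnt big1 // => t _; rewrite /compo /= apos /=.
  suff -> : (a + sumn [seq val i | i <- t] == M) = false by rewrite andbF.
  apply/negbTE; rewrite neq_ltn; apply/orP; right.
  exact: leq_trans aM (leq_addr _ _).
rewrite -hrec -(big_mkord xpredT (fun a => ((0 < a) && (a <= M)) * fc r (M - a))).
rewrite (big_cat_nat _ (n := M.+1)); [|by []|exact: MB].
rewrite /= [X in addn _ X]big1_seq ?addn0; last first.
  move=> a /=; rewrite mem_index_iota => /andP [Ma _].
  by rewrite [a <= M]leqNgt Ma andbF.
apply: eq_big_nat => a /andP [_ aM].
by rewrite ltnS in aM; rewrite aM andbT.
Qed.

Lemma gcd_seq_dvd s x : x \in s -> gcd_seq s %| x.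
Proof.
elim: s => [|y s IH] //=; rewrite inE => /orP [/eqP ->|xs].
  exact: dvdn_gcdl.
exact: dvdn_trans (dvdn_gcdr _ _) (IH xs).
Qed.

Lemma gcd_seq_sum s : gcd_seq s %| sumn s.
Proof.
elim: s => [|y s IH] //=.
by rewrite dvdn_add ?dvdn_gcdl // (dvdn_trans (dvdn_gcdr _ _) IH).
Qed.

Lemma gcd_seq_mul s d : gcd_seq (map (muln^~ d) s) = gcd_seq s * d.
Proof. by elim: s => [|y s IH] //=; rewrite IH muln_gcdl. Qed.

Lemma sumn_mul s d : sumn (map (muln^~ d) s) = sumn s * d.
Proof. by elim: s => [|y s IH] //=; rewrite IH mulnDl. Qed.

Lemma all_pos_mul s d : 0 < d -> all (fun x => 0 < x) (map (muln^~ d) s) = all (fun x => 0 < x) s.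
Proof. by move=> d0; elim: s => [|y s IH] //=; rewrite IH muln_gt0 d0 andbT. Qed.

Lemma compo_mul N s d : 0 < d -> compo (N * d) (map (muln^~ d) s) = compo N s.
Proof.
by move=> d0; rewrite /compo all_pos_mul // sumn_mul eqn_pmul2r.
Qed.

Lemma cnt_sum1 B r (P : pred (seq nat)) :
  cnt B r (fun s => P s) = \sum_(t : r.-tuple 'I_B | P (map val t)) 1.
Proof. by rewrite /cnt [RHS]big_mkcond; apply: eq_bigr => t _; case: (P _). Qed.

Lemma stepD N m r : 0 < N -> m %| N ->
  cnt N.+1 r (fun s => compo N s && (gcd_seq s == N %/ m)) =
  cnt m.+1 r (fun s => compo m s && (gcd_seq s == 1)).
Proof.
move=> N0 mN.
set d := N %/ m.
have Nmd : N = m * d by rewrite /d mulnC divnK.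
have d0 : 0 < d by move: N0; rewrite Nmd muln_gt0 => /andP [].
have hv (a : 'I_m.+1) : a * d < N.+1.
  by rewrite ltnS Nmd leq_mul2r -ltnS ltn_ord orbT.
set h := fun j : r.-tuple 'I_m.+1 =>
  map_tuple (fun a : 'I_m.+1 => inord (a * d) : 'I_N.+1) j.
have hval j : map val (h j) = map (muln^~ d) (map val j).
  rewrite /h /= -!map_comp; apply: eq_map => a /=.
  by rewrite inordK.
rewrite !cnt_sum1 (reindex h) /=; last first.
  exists (fun t : r.-tuple 'I_N.+1 =>
    map_tuple (fun b : 'I_N.+1 => inord (b %/ d) : 'I_m.+1) t).
    move=> j _; apply: val_inj => /=; rewrite -map_comp -[RHS]map_id.
    apply: eq_map => a /=; apply: ord_inj.
    by rewrite inordK (inordK (hv a)) mulnK.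
  move=> t; rewrite inE => /andP [_ /eqP g]; apply: val_inj => /=.
  rewrite -map_comp -[RHS]map_id; apply/eq_in_map => b bt /=.
  have db : d %| b.
    by rewrite -g; apply: gcd_seq_dvd; apply/mapP; exists b.
  apply: ord_inj.
  have bd : b %/ d < m.+1.
    by rewrite ltnS leq_divLR // -Nmd -ltnS ltn_ord.
  by rewrite (inordK bd) divnK // inordK.
apply: eq_bigl => j.
rewrite hval Nmd compo_mul // gcd_seq_mul.
by rewrite -{2}[d]mul1n eqn_pmul2r.
Qed.

Lemma c_psi_cnt m r : c_psi m r = cnt m.+1 r (fun s => compo m s && (gcd_seq s == 1)).
Proof.
rewrite /c_psi -sum1_card cnt_sum1; apply: eq_bigl => t.
rewrite inE /is_rp_composition /compo all_map sumnE big_map andbA.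
by [].
Qed.

Lemma cnt_sum B r (I : eqType) (idx : seq I) (P : pred I) (G : I -> seq nat -> nat) :
  cnt B r (fun s => \sum_(i <- idx | P i) G i s) = \sum_(i <- idx | P i) cnt B r (G i).
Proof. by rewrite /cnt exchange_big. Qed.

Lemma dvd_eq N g m : 0 < N -> g %| N -> 0 < m ->
  ((m %| N) && (g == N %/ m)) = (m == N %/ g).
Proof.
move=> N0 gN m0.
have g0 : 0 < g by case: g gN => //; rewrite dvd0n => /eqP E; move: N0; rewrite E.
apply/idP/idP.
  move=> /andP [mN /eqP ->].
  have q0 : 0 < N %/ m by rewrite divn_gt0 // dvdn_leq.
  by rewrite -{1}(divnK mN) mulKn.
move=> /eqP ->.
have q0 : 0 < N %/ g by rewrite divn_gt0 // dvdn_leq.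
apply/andP; split.
  by rewrite -{2}(divnK gN) dvdn_mulr.
by rewrite -{1}(divnK gN) mulKn.
Qed.

Lemma sum_eq1 (s : seq nat) c : \sum_(i <- s) (i == c) = count_mem c s.
Proof. by elim: s => [|x s IH]; rewrite ?big_nil ?big_cons //= IH eq_sym. Qed.

Lemma partition1 N s : 0 < N -> compo N s ->
  \sum_(1 <= m < N.+1 | m %| N) (gcd_seq s == N %/ m) = 1.
Proof.
move=> N0 /andP [_ /eqP sN].
have gN : gcd_seq s %| N by rewrite -sN gcd_seq_sum.
have g0 : 0 < gcd_seq s.
  by case: (gcd_seq s) gN => //; rewrite dvd0n => /eqP E; move: N0; rewrite E.
rewrite big_mkcond /= (eq_big_nat _ _ (F2 := fun m => (m == N %/ gcd_seq s) : nat)); last first.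
  move=> m /andP [m0 _]; rewrite -(dvd_eq N0 gN m0).
  by case: (m %| N).
rewrite sum_eq1 count_uniq_mem ?iota_uniq // mem_iota.
rewrite divn_gt0 // dvdn_leq //= subn1 /= add1n ltnS leq_div //.
Qed.

Lemma stepB N r : 0 < N -> 0 < r ->
  \sum_(1 <= m < N.+1 | m %| N) c_psi m r = 'C(N.-1, r.-1).
Proof.
move=> N0 r0.
have -> : 'C(N.-1, r.-1) = fc r N by case: r r0 => // r _; case: N N0.
rewrite -(cnt_comp _ (ltnSn N)).
rewrite (eq_bigr (fun m => cnt N.+1 r (fun s => compo N s && (gcd_seq s == N %/ m)))); last first.
  by move=> m mN; rewrite c_psi_cnt stepD.
rewrite -cnt_sum; apply: eq_bigr => t _.
case c: (compo N _) => /=.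
  by rewrite partition1.
by rewrite big1.
Qed.

Lemma stepB' n k r : 0 < k -> k <= n -> 0 < r ->
  \sum_(1 <= m < n.+1) c_psi m r * (m %| k) = 'C(k.-1, r.-1).
Proof.
move=> k0 kn r0.
rewrite -(stepB k0 r0) (big_cat_nat _ (n := k.+1)); [|by []|by rewrite ltnS].
rewrite /= [X in addn _ X]big1_seq ?addn0; last first.
  move=> m /andP [_]; rewrite mem_index_iota => /andP [km _].
  case: (boolP (m %| k)) => [/(dvdn_leq k0)|] /=; last by rewrite muln0.
  by rewrite leqNgt km.
rewrite [RHS]big_mkcond; apply: eq_bigr => m _.
by case: (m %| k); rewrite ?muln1 ?muln0.
Qed.

Local Open Scope ring_scope.

Lemma sum_if_eq (R : nmodType) (a b c : nat) (G : R) :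
  \sum_(a <= k < b) (if k == c then G else 0) = if (a <= c < b)%N then G else 0.
Proof.
elim: b => [|b IH]; first by rewrite big_geq // andbF.
case: (leqP a b) => ab.
  rewrite big_nat_recr //= IH.
  case: (eqVneq b c) => [<-|ne].
    by rewrite ltnn andbF ab ltnSn add0r.
  by rewrite addr0 ltnS [(c <= b)%N]leq_eqVlt [c == b]eq_sym (negbTE ne).
rewrite big_geq // ifF //.
apply/negbTE/negP => /andP [ac cb]; rewrite ltnS in cb.
by move: (leq_trans ac cb); rewrite leqNgt ab.
Qed.


Lemma omega_neg (x : int) : x < 0 -> omega x = 0.
Proof. by case: x. Qed.

Lemma Omega_ext m K X : (0 < m)%N -> (K < X)%N ->
  Omega m K = \sum_(j < X) omega (K%:Z - (j * m)%N%:Z).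
Proof.
move=> m0 KX.
rewrite /Omega -!(big_mkord xpredT (fun j => omega (K%:Z - (j * m)%N%:Z))).
rewrite [RHS](big_cat_nat _ (n := K.+1)); [|by []|exact: KX].
rewrite /= [X in _ = _ + X]big1_seq ?addr0 //.
move=> j /andP [_]; rewrite mem_index_iota => /andP [Kj _].
apply: omega_neg; rewrite subr_lt0 ltz_nat.
apply: leq_trans Kj _; exact: leq_pmulr.
Qed.

Lemma stepA m n : (0 < m)%N -> (m <= n)%N ->
  Omega m (n - m) = \sum_(1 <= k < n.+1) (m %| k)%N%:R * omega (n - k)%N%:Z.
Proof.
move=> m0 mn.
rewrite (@Omega_ext _ _ n.+1) //; last by lia.
rewrite -(big_mkord xpredT (fun j => omega ((n - m)%N%:Z - (j * m)%N%:Z))).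
transitivity (\sum_(0 <= j < n.+1) \sum_(1 <= k < n.+1)
   (if k == (j.+1 * m)%N then omega (n - k)%N%:Z else 0)).
  apply: eq_bigr => j _.
  rewrite (eq_bigr (fun k => if k == (j.+1 * m)%N then omega (n - j.+1 * m)%N%:Z else 0));
    last by move=> k _; case: eqP => // ->.
  rewrite sum_if_eq.
  case: (leqP (j.+1 * m) n) => cn.
    have -> : (0 < j.+1 * m)%N by rewrite muln_gt0.
    rewrite /= ltnS cn subzn; last by rewrite mulSn in cn; lia.
    by congr (omega (Posz _)); rewrite mulSn; lia.
  rewrite ifF; last by rewrite ltnS [(_ <= n)%N]leqNgt cn andbF.
  apply: omega_neg; rewrite subr_lt0 ltz_nat; rewrite mulSn in cn; lia.
rewrite exchange_big_nat /=; apply: eq_big_nat => k /andP [k0 kn].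
case: (boolP (m %| k)%N) => mk.
  rewrite mul1r.
  rewrite (eq_bigr (fun j => if j == (k %/ m).-1 then omega (n - k)%N%:Z else 0)).
    rewrite sum_if_eq /= ifT //.
    have := leq_div k m; lia.
  move=> j _.
  have km : k = (k %/ m * m)%N by rewrite divnK.
  have q0 : (0 < k %/ m)%N by rewrite divn_gt0 // dvdn_leq.
  congr (if _ then _ else _).
  rewrite {1}km eqn_pmul2r //; lia.
rewrite mul0r big1 // => j _.
case: eqP => // E; move: mk; rewrite E dvdn_mull //.
Qed.

Theorem mainTheorem11 (n r : nat) (hn : (1 <= n)%N) (hr : (1 <= r)%N) :
  \sum_(1 <= k < n.+1) ('C(k.-1, r.-1))%:R * omega (n - k)%N%:Z =
  \sum_(1 <= m < n.+1) (c_psi m r)%:R * Omega m (n - m)%N :> int.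
Proof.
rewrite [RHS](eq_big_nat _ _ (F2 := fun m => \sum_(1 <= k < n.+1)
   ((c_psi m r * (m %| k))%N)%:R * omega (n - k)%N%:Z)); last first.
  move=> m /andP [m0 mn]; rewrite ltnS in mn.
  rewrite stepA // mulr_sumr; apply: eq_bigr => k _.
  by rewrite natrM mulrA.
rewrite exchange_big_nat /=; apply: eq_big_nat => k /andP [k0 kn].
rewrite ltnS in kn.
by rewrite -mulr_suml -natr_sum stepB'.
Qed.
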